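(* Let $d\ge 3$, $n\ge 2$, and let $F$ be an $n$-lattice framework in $\mathbb{R}^d$. Suppose that for every $1\le i\le d$ and every $0\le c\le n-1$, the subframework $F_{i,c}$ has a bar between every pair of its joints. Then $F$ is infinitesimally rigid.
   Context: A framework in $\mathbb{R}^d$ is a finite graph whose vertices (joints) are distinct points of $\mathbb{R}^d$ and whose edges (bars) are segments between pairs of joints. An infinitesimal motion of $\mathbb{R}^d$ is a map $f:\mathbb{R}^d\to\mathbb{R}^d$ with $(f(x)-f(y))\cdot(x-y)=0$ for all $x,y$. For a framework $F$ with joint set $X$, an infinitesimal motion of $F$ is a map $g:X\to\mathbb{R}^d$ with $(g(x)-g(y))\cdot(x-y)=0$ for every bar $xy$; $F$ is infinitesimally rigid if every infinitesimal motion of $F$ is the restriction to $X$ of an infinitesimal motion of $\mathbb{R}^d$. An $n$-lattice framework in $\mathbb{R}^d$ is a framework whose joints are the points $(x_1,\ldots,x_d)$ with all $x_i\in\{0,1,\ldots,n-1\}$ (bars arbitrary). For such $F$, $F_{i,c}$ denotes the subframework induced by all joints whose $i$-th coordinate equals $c$ (all bars of $F$ between such joints). *)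

(* Defs.v *)
From HB Require Import structures.
From mathcomp Require Import all_boot all_order all_algebra.
From mathcomp Require Import reals.
Set Implicit Arguments. Unset Strict Implicit. Unset Printing Implicit Defensive.
Import Order.TTheory GRing.Theory Num.Theory.
Local Open Scope ring_scope.

Definition dotv (R : realType) (d : nat) (u v : 'rV[R]_d) : R :=
  \sum_(i < d) u ord0 i * v ord0 i.

(* Joints of an n-lattice framework in R^d: integer points with coordinates
   in {0,...,n-1}, indexed by finite functions 'I_d -> 'I_n. *)
Definition joint (d n : nat) := {ffun 'I_d -> 'I_n}.

Definition jpos (R : realType) (d n : nat) (x : joint d n) : 'rV[R]_d :=
  \row_(i < d) ((x i : nat)%:R).

Definition inf_motion_space (R : realType) (d : nat)
    (f : 'rV[R]_d -> 'rV[R]_d) : Prop :=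
  forall x y : 'rV[R]_d, dotv (f x - f y) (x - y) = 0.

(* An n-lattice framework is given by its bar relation E on the joints
   (a bar between x and y exists iff E x y || E y x).
   Infinitesimal motion of the framework: *)
Definition inf_motion_fw (R : realType) (d n : nat) (E : rel (joint d n))
    (g : joint d n -> 'rV[R]_d) : Prop :=
  forall x y : joint d n, E x y ->
    dotv (g x - g y) (jpos R x - jpos R y) = 0.

Definition inf_rigid (R : realType) (d n : nat) (E : rel (joint d n)) : Prop :=
  forall g : joint d n -> 'rV[R]_d, inf_motion_fw E g ->
    exists f : 'rV[R]_d -> 'rV[R]_d,
      inf_motion_space f /\ forall x : joint d n, g x = f (jpos R x).

Definition slice_complete (d n : nat) (E : rel (joint d n)) (i : 'I_d) (c : 'I_n) : Prop :=
  forall x y : joint d n, x i = c -> y i = c -> x != y -> E x y || E y x.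

(* Main.v *)
Require Import Defs.
From HB Require Import structures.
From mathcomp Require Import all_boot all_order all_algebra.
From mathcomp Require Import reals.
From mathcomp Require Import ring lra.
Set Implicit Arguments. Unset Strict Implicit. Unset Printing Implicit Defensive.
Import Order.TTheory GRing.Theory Num.Theory.
Local Open Scope ring_scope.

Definition z0 d n' : joint d n'.+2 := [ffun _ => ord0].
Definition upd d n (x : joint d n) (i : 'I_d) (c : 'I_n) : joint d n :=
  [ffun j => if j == i then c else x j].
Definition one n' : 'I_n'.+2 := @Ordinal n'.+2 1 isT.
Definition ej d n' (k : 'I_d) : joint d n'.+2 := upd (z0 d n') k (one n').
Definition cr (R : realType) d n (x : joint d n) (i : 'I_d) : R := (x i : nat)%:R.

Lemma updE d n (x : joint d n) i c j : upd x i c j = if j == i then c else x j.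
Proof. by rewrite /upd ffunE. Qed.

Lemma z0E d n' i : z0 d n' i = ord0.
Proof. by rewrite ffunE. Qed.
Lemma ejE d n' (k i : 'I_d) : ej n' k i = if i == k then one n' else ord0.
Proof. by rewrite /ej updE z0E. Qed.

Lemma sum1 (R : realType) d (F : 'I_d -> R) m :
  (forall i, i != m -> F i = 0) -> \sum_i F i = F m.
Proof. by move=> H; rewrite (bigD1 m) //= big1 ?addr0. Qed.

Lemma sum2 (R : realType) d (F : 'I_d -> R) j k : j != k ->
  (forall i, i != j -> i != k -> F i = 0) -> \sum_i F i = F j + F k.
Proof.
move=> jk H; rewrite (bigD1 j) //= (bigD1 k) /=; last by rewrite eq_sym.
by rewrite big1 ?addr0 // => i /andP [] /H.
Qed.

Lemma pick_two d (j : 'I_d) : (3 <= d)%N ->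
  exists i k : 'I_d, [/\ i != j, k != j & i != k].
Proof.
move=> hd.
have h0 : (0 < d)%N by apply: leq_trans hd.
have h1 : (1 < d)%N by apply: leq_trans hd.
have h2 : (2 < d)%N by [].
case: j => [[|[|j]] hj].
- by exists (Ordinal h1), (Ordinal h2).
- by exists (Ordinal h0), (Ordinal h2).
- by exists (Ordinal h0), (Ordinal h1).
Qed.

Lemma pick_other d (k l : 'I_d) : (3 <= d)%N -> exists m : 'I_d, m != k /\ m != l.
Proof.
move=> hd; have [a [b [ak bk ab]]] := pick_two k hd.
case: (eqVneq a l) => al; last by exists a.
by exists b; split => //; rewrite -al eq_sym.
Qed.

Lemma ord0_cr (R : realType) d n' (x : joint d n'.+2) i : x i = ord0 -> cr R x i = 0.
Proof. by rewrite /cr => ->. Qed.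
Lemma one_cr (R : realType) d n' (x : joint d n'.+2) i : x i = one n' -> cr R x i = 1.
Proof. by rewrite /cr => ->. Qed.

Definition barP (R : realType) d n' (h : joint d n'.+2 -> 'I_d -> R) :=
  forall x y : joint d n'.+2, (exists i, x i = y i) ->
     \sum_i (h x i - h y i) * (cr R x i - cr R y i) = 0.

Lemma stepC (R : realType) d n' (h : joint d n'.+2 -> 'I_d -> R) (x t t' : joint d n'.+2) m :
  barP h -> (forall i, h t i = 0) -> (forall i, h t' i = 0) ->
  (exists i, x i = t i) -> (exists i, x i = t' i) ->
  (forall i, i != m -> t i = t' i) -> t m = one n' -> t' m = ord0 -> h x m = 0.
Proof.
move=> hP ht ht' s1 s2 ag tm tm'.
have e1 : \sum_i h x i * (cr R x i - cr R t i) = 0.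
  by rewrite -[RHS](hP _ _ s1); apply: eq_bigr => i _; rewrite ht subr0.
have e2 : \sum_i h x i * (cr R x i - cr R t' i) = 0.
  by rewrite -[RHS](hP _ _ s2); apply: eq_bigr => i _; rewrite ht' subr0.
have : \sum_i h x i * (cr R t i - cr R t' i) = 0.
  have -> : \sum_i h x i * (cr R t i - cr R t' i) =
     \sum_i h x i * (cr R x i - cr R t' i) - \sum_i h x i * (cr R x i - cr R t i).
    by rewrite -sumrB; apply: eq_bigr => i _; ring.
  by rewrite e1 e2 subrr.
rewrite (@sum1 _ _ _ m); last by move=> i /ag; rewrite /cr => ->; rewrite subrr mulr0.
by rewrite (one_cr _ tm) (ord0_cr _ tm') subr0 mulr1.
Qed.

Lemma claimA (R : realType) d n' (h : joint d n'.+2 -> 'I_d -> R) :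
  barP h -> (forall i, h (z0 d n') i = 0) -> (forall k i, h (ej n' k) i = 0) ->
  forall (y : joint d n'.+2) j m, y j = ord0 -> m != j -> h y m = 0.
Proof.
move=> hP hz he y j m yj mj.
apply: (stepC (t := ej n' m) (t' := z0 d n')) => //.
- by exists j; rewrite /ej updE eq_sym (negbTE mj) /z0 ffunE.
- by exists j; rewrite /z0 ffunE.
- by move=> i im; rewrite /ej updE (negbTE im).
- by rewrite /ej updE eqxx.
- by rewrite /z0 ffunE.
Qed.

Lemma claimB (R : realType) d n' (h : joint d n'.+2 -> 'I_d -> R) :
  (3 <= d)%N ->
  barP h -> (forall i, h (z0 d n') i = 0) -> (forall k i, h (ej n' k) i = 0) ->
  forall (y : joint d n'.+2) j, y j = ord0 -> forall m, h y m = 0.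
Proof.
move=> hd hP hz he y j yj m.
case: (eqVneq m j) => [->|mj]; last exact: (claimA hP hz he yj mj).
have [i [k [ij kj ik]]] := pick_two j hd.
have hy m' : m' != j -> h y m' = 0 by move=> ?; apply: (claimA hP hz he yj).
pose y2 := upd (upd y j (one n')) k ord0.
pose y3 := upd (upd y j (one n')) i ord0.
have y2E m' : y2 m' = if m' == k then ord0 else if m' == j then one n' else y m'.
  by rewrite /y2 !updE.
have y3E m' : y3 m' = if m' == i then ord0 else if m' == j then one n' else y m'.
  by rewrite /y3 !updE.
have h2 m' : m' != k -> h y2 m' = 0.
  by move=> ?; apply: (claimA hP hz he (j := k)) => //; rewrite y2E eqxx.
have h3 m' : m' != i -> h y3 m' = 0.
  by move=> ?; apply: (claimA hP hz he (j := i)) => //; rewrite y3E eqxx.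
have jk : j != k by rewrite eq_sym.
have ji : j != i by rewrite eq_sym.
have ki : k != i by rewrite eq_sym.
have E1 : exists s, y s = y2 s by exists i; rewrite y2E (negbTE ik) (negbTE ij).
move/hP: E1; rewrite (@sum2 _ _ _ j k) //; last first.
  by move=> s sj sk; rewrite /cr y2E (negbTE sj) (negbTE sk) subrr mulr0.
rewrite /cr !y2E (negbTE jk) !eqxx yj (h2 j jk) (hy k kj) /one /= ?mulr0n ?mulr1n => E1.
have E2 : exists s, y s = y3 s by exists k; rewrite y3E (negbTE ki) (negbTE kj).
move/hP: E2; rewrite (@sum2 _ _ _ j i) //; last first.
  by move=> s sj si; rewrite /cr y3E (negbTE sj) (negbTE si) subrr mulr0.
rewrite /cr !y3E (negbTE ji) !eqxx yj (h3 j ji) (hy i ij) /one /= ?mulr0n ?mulr1n => E2.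
have E3 : exists s, y2 s = y3 s by exists j; rewrite y3E y2E (negbTE ji) (negbTE jk) eqxx.
move/hP: E3; rewrite (@sum2 _ _ _ k i) //; last first.
  by move=> s sk si; rewrite /cr y3E y2E (negbTE sk) (negbTE si) subrr mulr0.
rewrite /cr !y3E !y2E (negbTE ki) (negbTE kj) (negbTE ik) (negbTE ij) !eqxx (h2 i ik) (h3 k ki) /one /= ?mulr0n ?mulr1n => E3.
lra.
Qed.

Lemma core (R : realType) d n' (h : joint d n'.+2 -> 'I_d -> R) :
  (3 <= d)%N ->
  barP h -> (forall i, h (z0 d n') i = 0) -> (forall k i, h (ej n' k) i = 0) ->
  forall x m, h x m = 0.
Proof.
move=> hd hP hz he x m.
have [i [l [im lm il]]] := pick_two m hd.
pose t' := upd (z0 d n') i (x i).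
pose t := upd t' m (one n').
have li : l != i by rewrite eq_sym.
have ht' : forall s, h t' s = 0.
  by apply: (claimB hd hP hz he (j := l)); rewrite /t' updE (negbTE li) /z0 ffunE.
have ht : forall s, h t s = 0.
  by apply: (claimB hd hP hz he (j := l)); rewrite /t !updE (negbTE li) (negbTE lm) /z0 ffunE.
apply: (stepC (t := t) (t' := t')) => //.
- by exists i; rewrite /t /t' !updE (negbTE im) eqxx.
- by exists i; rewrite /t' !updE eqxx.
- by move=> s sm; rewrite /t updE (negbTE sm).
- by rewrite /t updE eqxx.
- by rewrite /t' updE eq_sym (negbTE im) /z0 ffunE.
Qed.

Lemma dotv_jpos (R : realType) d n (v : 'rV[R]_d) (a b : joint d n) :
  dotv v (jpos R a - jpos R b) = \sum_i v ord0 i * (cr R a i - cr R b i).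
Proof. by apply: eq_bigr => i _; rewrite /jpos !mxE. Qed.

Theorem theorem6 (R : realType) (d n : nat) (E : rel (joint d n)) :
  (3 <= d)%N -> (2 <= n)%N ->
  (forall (i : 'I_d) (c : 'I_n), slice_complete E i c) ->
  inf_rigid R E.
Proof.
case: n E => [|[|n']] E hd hn hsl //.
move=> g hg.
have Pg : forall x y : joint d n'.+2, (exists i, x i = y i) ->
    \sum_i (g x ord0 i - g y ord0 i) * (cr R x i - cr R y i) = 0.
  move=> x y [i hi]; case: (eqVneq x y) => [->|nxy].
    by apply: big1 => k _; rewrite subrr mul0r.
  have := hsl i (x i) x y erefl (esym hi) nxy; case/orP => hE.
    by have := hg _ _ hE; rewrite dotv_jpos => H; rewrite -[RHS]H; apply: eq_bigr => k _; rewrite !mxE.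
  by have := hg _ _ hE; rewrite dotv_jpos => H; rewrite -[RHS]H; apply: eq_bigr => k _; rewrite !mxE; ring.
pose u k := g (ej n' k) - g (z0 d n').
pose f (p : 'rV[R]_d) := g (z0 d n') + \sum_k p ord0 k *: u k.
have diag : forall k, u k ord0 k = 0.
  move=> k; have [s [sk _]] := pick_other k k hd.
  have sh : exists s, ej n' k s = z0 d n' s.
    by exists s; rewrite ejE z0E (negbTE sk).
  move/Pg: sh; rewrite (@sum1 _ _ _ k); last first.
    by move=> i ik; rewrite /cr ejE z0E (negbTE ik) subrr mulr0.
  rewrite /cr ejE eqxx z0E /one /= ?mulr0n ?mulr1n subr0 mulr1.
  by rewrite /u !mxE.
have skew : forall k l, u k ord0 l = - u l ord0 k.
  move=> k l; case: (eqVneq k l) => [<-|kl]; first by rewrite diag oppr0.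
  have [s [sk sl]] := pick_other k l hd.
  have sh : exists s, ej n' k s = ej n' l s.
    by exists s; rewrite !ejE (negbTE sk) (negbTE sl).
  have lk : l != k by rewrite eq_sym.
  move/Pg: sh; rewrite (@sum2 _ _ _ k l) //; last first.
    by move=> i ik il; rewrite /cr !ejE (negbTE ik) (negbTE il) subrr mulr0.
  rewrite /cr !ejE !eqxx (negbTE kl) (negbTE lk) /one /= ?mulr0n ?mulr1n => H.
  have := diag k; have := diag l; rewrite /u !mxE => d1 d2.
  lra.
have fD : forall p q l, (f p - f q) ord0 l = \sum_k (p ord0 k - q ord0 k) * u k ord0 l.
  move=> p q l; rewrite /f !mxE !summxE opprD addrACA subrr add0r -sumrB.
  by apply: eq_bigr => k _; rewrite !mxE mulrBl.
have fmot : inf_motion_space f.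
  move=> p q; rewrite /dotv.
  pose w k := p ord0 k - q ord0 k.
  have -> : \sum_i (f p - f q) ord0 i * (p - q) ord0 i =
            \sum_l \sum_k w k * u k ord0 l * w l.
    apply: eq_bigr => l _; rewrite fD mulr_suml !mxE.
    by apply: eq_bigr => k _; rewrite !mxE.
  set S := (X in X = 0).
  have eS : S = - S.
    rewrite /S [LHS]exchange_big -sumrN; apply: eq_bigr => i _.
    rewrite -sumrN; apply: eq_bigr => j _.
    rewrite (skew i j); ring.
  lra.
pose hc (x : joint d n'.+2) i := g x ord0 i - f (jpos R x) ord0 i.
have hP : barP hc.
  move=> x y sh.
  have -> : \sum_i (hc x i - hc y i) * (cr R x i - cr R y i) =
    \sum_i (g x ord0 i - g y ord0 i) * (cr R x i - cr R y i) -
    \sum_i (f (jpos R x) - f (jpos R y)) ord0 i * (cr R x i - cr R y i).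
    by rewrite -sumrB; apply: eq_bigr => i _; rewrite /hc !mxE; ring.
  by rewrite Pg // -dotv_jpos fmot subr0.
have hz : forall i, hc (z0 d n') i = 0.
  move=> i; rewrite /hc /f !mxE summxE big1 ?addr0 ?subrr // => k _.
  by rewrite /jpos !mxE z0E /= mulr0n mul0r.
have he : forall k i, hc (ej n' k) i = 0.
  move=> k i; rewrite /hc /f !mxE summxE (@sum1 _ _ _ k); last first.
    by move=> l lk; rewrite /jpos !mxE ejE (negbTE lk) /= mulr0n mul0r.
  rewrite /jpos !mxE ejE eqxx /one /= mulr1n mul1r.
  ring.
exists f; split => // x; apply/rowP => i.
have := core hd hP hz he x i; rewrite /hc => /eqP; rewrite subr_eq0 => /eqP.
by [].
Qed.
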